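(* Let $W:[Q]^2\to([Q]\cup\{\phi\})^2$ be any function and $n\ge1$. If $s$ is the maximum size of a bipartite independent set in $G_{W,1}$, then the maximum size of a bipartite independent set in $G_{W,n}$ is $s^n$.
   Context: Fix an integer $q\ge1$, $Q=2^q$, $[Q]=\{1,\dots,Q\}$, and a symbol $\phi\notin[Q]$. $G_{W,n}$ is the bipartite graph whose two sides are two copies of $[Q]^n$, with $x^{(n)}=(x_1,\dots,x_n)$ (left) adjacent to $y^{(n)}=(y_1,\dots,y_n)$ (right) iff there is an index $i$ with $W(x_i,y_i)=(\phi,\phi)$. In a bipartite graph with sides $X,Y$, a bipartite independent set (BPIS) is a pair $(A,B)$ with $A\subseteq X$, $B\subseteq Y$ and no edge between $A$ and $B$; its size is $|A|\cdot|B|$. *)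

(* Defs.v *)
From mathcomp Require Import all_boot.
Set Implicit Arguments. Unset Strict Implicit. Unset Printing Implicit Defensive.

(* [Q] is modelled by 'I_Q (0-based); [Q] ∪ {phi} by option 'I_Q with
   phi = None.  W : [Q]^2 -> ([Q] ∪ {phi})^2 is curried. *)
Definition phi_sym {Q : nat} : option 'I_Q := None.

(* vertices of G_{W,n} (on either side): words in [Q]^n *)
Definition word (Q n : nat) := {ffun 'I_n -> 'I_Q}.

Definition GW_adj (Q : nat) (W : 'I_Q -> 'I_Q -> option 'I_Q * option 'I_Q)
  (n : nat) (x y : word Q n) : bool :=
  [exists i : 'I_n, W (x i) (y i) == (phi_sym, phi_sym)].

Definition is_BPIS (Q : nat) (W : 'I_Q -> 'I_Q -> option 'I_Q * option 'I_Q)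
  (n : nat) (A B : {set word Q n}) : bool :=
  [forall x in A, forall y in B, ~~ GW_adj W x y].

Definition max_BPIS (Q : nat) (W : 'I_Q -> 'I_Q -> option 'I_Q * option 'I_Q)
  (n : nat) : nat :=
  \max_(AB : {set word Q n} * {set word Q n} | is_BPIS W AB.1 AB.2)
     (#|AB.1| * #|AB.2|).

(* Main.v *)
Require Import Defs.
From mathcomp Require Import all_boot.

Set Implicit Arguments.
Section Aux.
Variable Q : nat.
Variable W : 'I_Q -> 'I_Q -> option 'I_Q * option 'I_Q.

Definition good (C D : {set 'I_Q}) : bool :=
  [forall a in C, forall b in D, W a b != (phi_sym, phi_sym)].

Definition proj n (A : {set word Q n}) (i : 'I_n) : {set 'I_Q} := [set (x : word Q n) i | x in A].

Definition box n (F : 'I_n -> {set 'I_Q}) : {set word Q n} :=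
  [set x : word Q n | [forall i, x i \in F i]].

Lemma card_box n (F : 'I_n -> {set 'I_Q}) : #|box F| = \prod_i #|F i|.
Proof.
have -> : #|box F| = #|family (fun i : 'I_n => F i)|.
  by apply: eq_card => x; rewrite inE.
by rewrite card_family foldrE big_map big_enum.
Qed.

Lemma sub_box n (A : {set word Q n}) : A \subset box (proj A).
Proof.
apply/subsetP => x xA; rewrite inE; apply/forallP => i.
by apply/imsetP; exists x.
Qed.

Lemma BPIS_proj n (A B : {set word Q n}) i :
  is_BPIS W A B -> good (proj A i) (proj B i).
Proof.
move/forallP=> H; apply/forallP => a; apply/implyP => /imsetP [x xA ->].
apply/forallP => b; apply/implyP => /imsetP [y yB ->].
have := H x; rewrite xA /= => /forallP /(_ y); rewrite yB /= /GW_adj.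
by rewrite negb_exists => /forallP /(_ i).
Qed.

Lemma box_BPIS n (F G : 'I_n -> {set 'I_Q}) :
  (forall i, good (F i) (G i)) -> is_BPIS W (box F) (box G).
Proof.
move=> H; apply/forallP => x; apply/implyP; rewrite inE => /forallP Hx.
apply/forallP => y; apply/implyP; rewrite inE => /forallP Hy.
rewrite /GW_adj negb_exists; apply/forallP => i.
have /forallP /(_ (x i)) := H i; rewrite Hx /= => /forallP /(_ (y i)).
by rewrite Hy.
Qed.

Lemma size_le n (A B : {set word Q n}) :
  #|A| * #|B| <= \prod_i (#|proj A i| * #|proj B i|).
Proof.
rewrite big_split /= -!card_box.
by apply: leq_mul; apply: subset_leq_card; apply: sub_box.
Qed.

Lemma good_le1 C D : good C D -> #|C| * #|D| <= max_BPIS W 1.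
Proof.
move=> g.
have H : is_BPIS W (box (fun _ : 'I_1 => C)) (box (fun _ => D)) by apply: box_BPIS.
have := @leq_bigmax_cond _ (fun AB : {set word Q 1} * {set word Q 1} =>
   is_BPIS W AB.1 AB.2) (fun AB => #|AB.1| * #|AB.2|)
   (box (fun _ => C), box (fun _ => D)) H.
by rewrite /max_BPIS /= !card_box !big_ord1.
Qed.

Lemma upper n : max_BPIS W n <= (max_BPIS W 1) ^ n.
Proof.
apply/bigmax_leqP => [[A B]] /= H.
apply: leq_trans (size_le A B) _.
have -> : max_BPIS W 1 ^ n = \prod_(i < n) max_BPIS W 1 by rewrite prod_nat_const card_ord.
apply: leq_prod => i _; apply: good_le1; exact: BPIS_proj.
Qed.

Lemma lower n : (max_BPIS W 1) ^ n <= max_BPIS W n.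
Proof.
have [[A1 B1] /= H1 e] := @eq_bigmax_cond _
   (fun AB : {set word Q 1} * {set word Q 1} => is_BPIS W AB.1 AB.2)
   (fun AB => #|AB.1| * #|AB.2|)
   (ltac:(apply/card_gt0P; exists (set0, set0); rewrite /in_mem /=;
          by apply/forallP => x; rewrite in_set0)).
rewrite /max_BPIS in e *; rewrite e /=.
set C := proj A1 ord0; set D := proj B1 ord0.
have g : good C D by apply: BPIS_proj.
have le1 : #|A1| * #|B1| <= #|C| * #|D|.
  by apply: leq_trans (size_le A1 B1) _; rewrite big_ord1.
have mono : forall t m k, m <= k -> m ^ t <= k ^ t.
  by move=> t m k mk; elim: t => // t IH; rewrite !expnS leq_mul.
apply: leq_trans (mono n _ _ le1) _.
have H : is_BPIS W (box (fun _ : 'I_n => C)) (box (fun _ => D)) by apply: box_BPIS.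
have := @leq_bigmax_cond _ (fun AB : {set word Q n} * {set word Q n} =>
   is_BPIS W AB.1 AB.2) (fun AB => #|AB.1| * #|AB.2|)
   (box (fun _ => C), box (fun _ => D)) H.
by rewrite /= !card_box !prod_nat_const card_ord expnMn.
Qed.
End Aux.

Theorem mainTheorem6 (q : nat) (hq : 1 <= q)
  (W : 'I_(2 ^ q) -> 'I_(2 ^ q) -> option 'I_(2 ^ q) * option 'I_(2 ^ q))
  (n : nat) (hn : 1 <= n) (s : nat) (hs : s = max_BPIS W 1) :
  max_BPIS W n = s ^ n.
Proof.
by subst s; apply/eqP; rewrite eqn_leq upper lower.
Qed.
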